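(* Let $t:\Sigma^*\to\Omega^*$ be a rational partial function with suffix-closed domain. If $X\subseteq\mathrm{dom}(t)$ is a context-free language and $t(X)$ has exponential growth, then $X$ has exponential $t$-growth and exponential $\overleftarrow{t}$-growth.
   Context: A partial function is rational if its graph is a rational subset of $\Sigma^*\times\Omega^*$. Suffix-closed: closed under taking suffixes. The suffix expansion $\overleftarrow{t}$ maps $a_1\cdots a_n\in\mathrm{dom}(t)$ to the sequence $(t(a_1\cdots a_n),t(a_2\cdots a_n),\dots,t(a_n))$. For a partial function $f$ and $X\subseteq\mathrm{dom}(f)$, the $f$-growth of $X$ is $n\mapsto|f(X\cap\Sigma^{\le n})|$; the growth of a language $Y\subseteq\Omega^*$ is $n\mapsto|Y\cap\Omega^{\le n}|$. A function $\gamma$ grows exponentially if there is $c>1$ with $\gamma(n)\ge c^n$ for infinitely many $n$. *)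

(* Defs.v *)
From mathcomp Require Import all_boot.
From Stdlib Require Import Reals ClassicalEpsilon.
Set Implicit Arguments. Unset Strict Implicit. Unset Printing Implicit Defensive.

Section Rational.
Variables (Sigma Omega : finType).

Inductive ratexp :=
  | RNone
  | RAtom of seq Sigma & seq Omega
  | RUnion of ratexp & ratexp
  | RCat of ratexp & ratexp
  | RStar of ratexp.

Inductive rsem : ratexp -> seq Sigma -> seq Omega -> Prop :=
  | rsem_atom u v : rsem (RAtom u v) u v
  | rsem_unionl e f u v : rsem e u v -> rsem (RUnion e f) u v
  | rsem_unionr e f u v : rsem f u v -> rsem (RUnion e f) u v
  | rsem_cat e f u1 v1 u2 v2 : rsem e u1 v1 -> rsem f u2 v2 ->
      rsem (RCat e f) (u1 ++ u2) (v1 ++ v2)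
  | rsem_star_nil e : rsem (RStar e) [::] [::]
  | rsem_star_cons e u1 v1 u2 v2 : rsem e u1 v1 -> rsem (RStar e) u2 v2 ->
      rsem (RStar e) (u1 ++ u2) (v1 ++ v2).

Definition rational_fun (t : seq Sigma -> option (seq Omega)) : Prop :=
  exists e : ratexp, forall u v, t u = Some v <-> rsem e u v.

End Rational.

Definition in_dom (A B : Type) (t : seq A -> option B) (u : seq A) : Prop :=
  t u <> None.

Definition suffix_closed_dom (A B : Type) (t : seq A -> option B) : Prop :=
  forall u v : seq A, in_dom t (u ++ v) -> in_dom t v.

(* suffix expansion: a1..an |-> (t(a1..an), t(a2..an), ..., t(an)) on dom t.
   (On a suffix-closed domain every entry is defined; odflt is never used there.) *)
Definition suffix_expansion (A B : Type) (t : seq A -> option (seq B))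
  (w : seq A) : option (seq (seq B)) :=
  if t w is Some _ then
    Some (map (fun k => odflt [::] (t (drop k w))) (iota 0 (size w)))
  else None.

Section CFG.
Variable (Sigma : finType).

Inductive derives (k : nat) (P : seq ('I_k * seq ('I_k + Sigma)%type))
  : seq ('I_k + Sigma)%type -> seq Sigma -> Prop :=
  | der_nil : derives P [::] [::]
  | der_term a s w : derives P s w -> derives P (inr a :: s) (a :: w)
  | der_nonterm A rhs s w1 w2 : (A, rhs) \in P -> derives P rhs w1 ->
      derives P s w2 -> derives P (inl A :: s) (w1 ++ w2).

Definition context_free (X : pred (seq Sigma)) : Prop :=
  exists (k : nat) (S : 'I_k) (P : seq ('I_k * seq ('I_k + Sigma)%type)),
    forall w, X w <-> derives P [:: inl S] w.

End CFG.

Definition words_upto (A : finType) (n : nat) : seq (seq A) :=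
  flatten (map (fun k => map (@tval k A) (enum {: k.-tuple A})) (iota 0 n.+1)).

Definition pb (P : Prop) : bool :=
  if excluded_middle_informative P then true else false.

Definition fgrowth (A : finType) (B : eqType) (f : seq A -> option B)
  (X : pred (seq A)) (n : nat) : nat :=
  size (undup (pmap f (filter X (words_upto A n)))).

Definition lang_growth (B : finType) (Y : seq B -> Prop) (n : nat) : nat :=
  count (fun v => pb (Y v)) (words_upto B n).

Definition image_lang (A B : Type) (f : seq A -> option B) (X : pred (seq A)) : B -> Prop :=
  fun v => exists u, X u /\ f u = Some v.

Definition grows_exponentially (g : nat -> nat) : Prop :=
  exists c : R, (1 < c)%R /\
    forall N : nat, exists n : nat, (N <= n)%N /\ (c ^ n <= INR (g n))%R.

(* Main.v *)
Require Import Defs.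
From mathcomp Require Import all_boot zify.
From Stdlib Require ClassicalEpsilon.
Set Implicit Arguments. Unset Strict Implicit. Unset Printing Implicit Defensive.

Section Aut.
Variables (Sigma Omega : finType).

Definition ocons (a : option Sigma) (u : seq Sigma) :=
  if a is Some x then x :: u else u.

Lemma ocons_cat a u1 u2 : ocons a (u1 ++ u2) = ocons a u1 ++ u2.
Proof. by case: a. Qed.

Inductive run (Q : Type) (step : Q -> option Sigma -> seq Omega -> Q -> Prop)
  : Q -> seq Sigma -> seq Omega -> Q -> Prop :=
| run0 p : run step p [::] [::] p
| runS p a w q u v r : step p a w q -> run step q u v r ->
    run step p (ocons a u) (w ++ v) r.

Lemma run_cat Q (step : Q -> _) p u1 v1 q u2 v2 r :
  run step p u1 v1 q -> run step q u2 v2 r -> run step p (u1 ++ u2) (v1 ++ v2) r.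
Proof.
elim=> [//|p' a w q' u v r' st _ IH] H2.
rewrite -ocons_cat -catA; apply: runS st _; exact: IH.
Qed.

Lemma run_split Q (step : Q -> _) p u1 u2 v r :
  run step p (u1 ++ u2) v r ->
  exists q v1 v2, v = v1 ++ v2 /\ run step p u1 v1 q /\ run step q u2 v2 r.
Proof.
move Eu: (u1 ++ u2) => u H; elim: H u1 Eu => [p' | p' a w q u' v' r' st Hr IH] u1 Eu.
  case: u1 Eu => // /= ->; exists p', [::], [::]; split=> //; split; exact: run0.
case: a st Eu => [x|] st Eu.
  case: u1 Eu => [|y u1] /= Eu.
    exists p', [::], (w ++ v'); split=> //; split; first exact: run0.
    by rewrite Eu; exact: (runS st Hr).
  case: Eu => -> Eu; have [q' [v1 [v2 [-> [H1 H2]]]]] := IH _ Eu.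
  exists q', (w ++ v1), v2; rewrite catA; split=> //; split=> //.
  exact: (runS (a:=Some x) st H1).
have [q' [v1 [v2 [-> [H1 H2]]]]] := IH _ Eu.
exists q', (w ++ v1), v2; rewrite catA; split=> //; split=> //.
exact: (runS (a:=None) st H1).
Qed.

Lemma run_map Q Q' (s : Q -> _) (s' : Q' -> _) (f : Q -> Q') p u v q :
  (forall p a w q, s p a w q -> s' (f p) a w (f q)) ->
  run s p u v q -> run s' (f p) u v (f q).
Proof. move=> Hs; elim=> [p'|p' a w q' u' v' r st _ IH]; [exact: run0|exact: runS (Hs _ _ _ _ st) IH]. Qed.

Lemma run1 Q (step : Q -> _) p a w q : step p a w q -> run step p (ocons a [::]) w q.
Proof. by move=> H; have := runS H (run0 step q); rewrite cats0. Qed.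

Lemma runE Q (step : Q -> _) p q u v r : step p None [::] q -> run step q u v r -> run step p u v r.
Proof. by move=> H1 H2; exact: (runS H1 H2). Qed.

Record aut := Aut {
  ast : finType;
  astep : ast -> option Sigma -> seq Omega -> ast -> Prop;
  aini : ast;
  afin : ast }.

Definition lang (A : aut) u v := run (@astep A) (aini A) u v (afin A).

Definition aut1 (oa : option Sigma) (w0 : seq Omega) : aut :=
  @Aut bool (fun p a w q => p = false /\ q = true /\ a = oa /\ w = w0) false true.

Lemma lang_aut1 oa w0 u v : lang (aut1 oa w0) u v <-> u = ocons oa [::] /\ v = w0.
Proof.
split.
  rewrite /lang /=.
  have: forall p u v q, run (astep (a:=aut1 oa w0)) p u v q -> q = true ->
     (p = false -> u = ocons oa [::] /\ v = w0) /\ (p = true -> u = [::] /\ v = [::]).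
    move=> p1 uu vv q1; elim=> [p'|p' a w q' u' v' r st _ IH] Eq.
      by split=> // E; subst.
    move: st => /= [Ep [Eq' [Ea Ew]]]; subst; have [_ /(_ erefl) [-> ->]] := IH erefl.
    by split=> //; rewrite cats0.
  by move=> H /H /(_ erefl) [/(_ erefl)].
move=> [-> ->]; rewrite /lang /=.
have := runS (step:=astep (a:=aut1 oa w0)) (p:=false) (a:=oa) (w:=w0) (q:=true) (u:=[::]) (v:=[::]) (r:=true).
by rewrite cats0; apply; [|exact: run0].
Qed.

Definition aut0 : aut := @Aut bool (fun _ _ _ _ => False) false true.

Lemma lang_aut0 u v : ~ lang aut0 u v.
Proof.
rewrite /lang /=; move Ep: false => p; move Eq: true => q H.
by case: H Ep Eq => [p'|p' a w q' u' v' r []] // <-.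
Qed.

Definition cstep (A B : aut) (p : ast A + ast B) a w (q : ast A + ast B) : Prop :=
  match p, q with
  | inl x, inl y => astep x a w y
  | inr x, inr y => astep x a w y
  | inl x, inr y => x = afin A /\ y = aini B /\ a = None /\ w = [::]
  | inr _, inl _ => False
  end.

Definition autC (A B : aut) : aut :=
  @Aut (ast A + ast B)%type (@cstep A B) (inl (aini A)) (inr (afin B)).

Lemma lang_autC A B u v : lang (autC A B) u v <->
  exists u1 v1 u2 v2, u = u1 ++ u2 /\ v = v1 ++ v2 /\ lang A u1 v1 /\ lang B u2 v2.
Proof.
split.
  rewrite /lang /=.
  have: forall p u v q, run (astep (a:=autC A B)) p u v q -> forall y, q = inr y ->
    match p with
    | inl x => exists u1 v1 u2 v2, u = u1 ++ u2 /\ v = v1 ++ v2 /\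
                 run (@astep A) x u1 v1 (afin A) /\ run (@astep B) (aini B) u2 v2 y
    | inr x => run (@astep B) x u v y end.
    move=> p1 uu vv q1; elim=> [p'|p' a w q' u' v' r st _ IH] y Eq.
      by subst; exact: run0.
    have {}IH := IH y Eq.
    case: p' q' st IH => [x|x] [x'|x'] //= st.
    - move=> [u1 [v1' [u2 [v2 [-> [-> [H1 H2]]]]]]].
      exists (ocons a u1), (w ++ v1'), u2, v2; rewrite ocons_cat catA; split=> //; split=> //.
      by split=> //; exact: runS st H1.
    - move: st => [-> [-> [-> ->]]] H; exists [::], [::], u', v'; split=> //; split=> //.
      by split=> //; exact: run0.
    - move=> H; exact: runS st H.
  by move=> H /H /(_ _ erefl).
move=> [u1 [v1 [u2 [v2 [-> [-> [H1 H2]]]]]]]; rewrite /lang /=.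
have H1' : run (astep (a:=autC A B)) (inl (aini A)) u1 v1 (inl (afin A)).
  by apply: (run_map (f := inl) _ H1).
have H2' : run (astep (a:=autC A B)) (inr (aini B)) u2 v2 (inr (afin B)).
  by apply: (run_map (f := inr) _ H2).
apply: run_cat H1' _.
rewrite -[u2]/(ocons None u2) -[v2]/([::] ++ v2); apply: runS H2'; by [].
Qed.

Definition ustep (A B : aut) (p : bool + (ast A + ast B)) a w (q : bool + (ast A + ast B)) : Prop :=
  match p, q with
  | inl false, inr (inl x) => x = aini A /\ a = None /\ w = [::]
  | inl false, inr (inr x) => x = aini B /\ a = None /\ w = [::]
  | inr (inl x), inl true => x = afin A /\ a = None /\ w = [::]
  | inr (inr x), inl true => x = afin B /\ a = None /\ w = [::]
  | inr (inl x), inr (inl y) => astep x a w y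
  | inr (inr x), inr (inr y) => astep x a w y
  | _, _ => False
  end.

Definition autU (A B : aut) : aut :=
  @Aut (bool + (ast A + ast B))%type (@ustep A B) (inl false) (inl true).

Lemma lang_autU A B u v : lang (autU A B) u v <-> lang A u v \/ lang B u v.
Proof.
split.
  rewrite /lang /=.
  have: forall p u v q, run (astep (a:=autU A B)) p u v q -> q = inl true ->
    match p with
    | inl false => lang A u v \/ lang B u v
    | inl true => u = [::] /\ v = [::]
    | inr (inl x) => run (@astep A) x u v (afin A)
    | inr (inr x) => run (@astep B) x u v (afin B) end.
    move=> p1 uu vv q1; elim=> [p'|p' a w q' u' v' r st _ IH] Eq.
      by subst.
    have {}IH := IH Eq.
    case: p' q' st IH => [[|]|[x|x]] [[|]|[x'|x']] //= st.
    - by move: st => [-> [-> ->]] H; left.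
    - by move: st => [-> [-> ->]] H; right.
    - by move: st => [-> [-> ->]] [-> ->]; exact: run0.
    - move=> H; exact: runS st H.
    - by move: st => [-> [-> ->]] [-> ->]; exact: run0.
    - move=> H; exact: runS st H.
  by move=> H /H /(_ erefl).
rewrite /lang /= => -[H|H].
  have H' : run (astep (a:=autU A B)) (inr (inl (aini A))) u v (inr (inl (afin A))).
    by apply: (run_map (f := fun x => inr (inl x)) _ H).
  apply: (runE (q:=inr (inl (aini A)))); first by [].
  rewrite -[u]cats0 -[v]cats0; apply: run_cat H' _.
  exact: (run1 (a:=None)).
have H' : run (astep (a:=autU A B)) (inr (inr (aini B))) u v (inr (inr (afin B))).
  by apply: (run_map (f := fun x => inr (inr x)) _ H).
apply: (runE (q:=inr (inr (aini B)))); first by [].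
rewrite -[u]cats0 -[v]cats0; apply: run_cat H' _.
exact: (run1 (a:=None)).
Qed.

Definition sstep (A : aut) (p : option (ast A)) a w (q : option (ast A)) : Prop :=
  match p, q with
  | None, Some x => x = aini A /\ a = None /\ w = [::]
  | Some x, None => x = afin A /\ a = None /\ w = [::]
  | Some x, Some y => astep x a w y
  | None, None => False
  end.

Definition autS (A : aut) : aut := @Aut (option (ast A)) (@sstep A) None None.

Inductive starL (L : seq Sigma -> seq Omega -> Prop) : seq Sigma -> seq Omega -> Prop :=
| starL0 : starL L [::] [::]
| starLS u1 v1 u2 v2 : L u1 v1 -> starL L u2 v2 -> starL L (u1 ++ u2) (v1 ++ v2).

Lemma lang_autS A u v : lang (autS A) u v <-> starL (lang A) u v.
Proof.
split.
  rewrite /lang /=.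
  have: forall p u v q, run (astep (a:=autS A)) p u v q -> q = None ->
    match p with
    | None => starL (lang A) u v
    | Some x => exists u1 v1 u2 v2, u = u1 ++ u2 /\ v = v1 ++ v2 /\
        run (@astep A) x u1 v1 (afin A) /\ starL (lang A) u2 v2 end.
    move=> p1 uu vv q1; elim=> [p'|p' a w q' u' v' r st _ IH] Eq.
      by subst; exact: starL0.
    have {}IH := IH Eq.
    case: p' q' st IH => [x|] [x'|] //= st.
    - move=> [u1 [v1' [u2 [v2 [-> [-> [H1 H2]]]]]]].
      exists (ocons a u1), (w ++ v1'), u2, v2; rewrite ocons_cat catA; split=> //; split=> //.
      by split=> //; exact: runS st H1.
    - move: st => [-> [-> ->]] H; exists [::], [::], u', v'; split=> //; split=> //.
      by split=> //; exact: run0.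
    - move: st => [-> [-> ->]] [u1 [v1' [u2 [v2 [-> [-> [H1 H2]]]]]]].
      exact: starLS H1 H2.
  by move=> H /H /(_ erefl).
rewrite /lang /=; elim=> [|u1 v1 u2 v2 H1 _ IH]; first exact: run0.
have H' : run (astep (a:=autS A)) (Some (aini A)) u1 v1 (Some (afin A)).
  by apply: (run_map (f := Some) _ H1).
apply: (runE (q:=Some (aini A))); first by [].
apply: run_cat H' _.
by apply: (runE (q:=None)) IH.
Qed.

Fixpoint autA (u : seq Sigma) (v : seq Omega) : aut :=
  if u is a :: u' then autC (aut1 (Some a) [::]) (autA u' v) else aut1 None v.

Lemma lang_autA u v u' v' : lang (autA u v) u' v' <-> u' = u /\ v' = v.
Proof.
elim: u u' v' => [|a u IH] u' v' /=; first by rewrite lang_aut1.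
rewrite lang_autC; split.
  move=> [u1 [v1 [u2 [v2 [-> [-> [/lang_aut1 [-> ->] /IH [-> ->]]]]]]]]; by [].
move=> [-> ->]; exists [:: a], [::], u, v; split=> //; split=> //; split.
  by rewrite lang_aut1.
by rewrite IH.
Qed.

Fixpoint aut_of (e : ratexp Sigma Omega) : aut :=
  match e with
  | RNone => aut0
  | RAtom u v => autA u v
  | RUnion e f => autU (aut_of e) (aut_of f)
  | RCat e f => autC (aut_of e) (aut_of f)
  | RStar e => autS (aut_of e)
  end.

Lemma aut_of_correct e u v : lang (aut_of e) u v <-> rsem e u v.
Proof.
split.
  elim: e u v => [|u0 v0|e IHe f IHf|e IHe f IHf|e IHe] u v /=.
  - by move/lang_aut0.
  - by move/lang_autA => [-> ->]; exact: rsem_atom.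
  - by move/lang_autU => [/IHe H|/IHf H]; [exact: rsem_unionl|exact: rsem_unionr].
  - move/lang_autC => [u1 [v1 [u2 [v2 [-> [-> [/IHe H1 /IHf H2]]]]]]]; exact: rsem_cat.
  - move/lang_autS; elim=> [|u1 v1 u2 v2 /IHe H1 _ H2]; first exact: rsem_star_nil.
    exact: rsem_star_cons.
elim=> {e u v} /=.
- by move=> u v; rewrite lang_autA.
- by move=> e f u v _ H; rewrite lang_autU; left.
- by move=> e f u v _ H; rewrite lang_autU; right.
- move=> e f u1 v1 u2 v2 _ H1 _ H2; rewrite lang_autC.
  by exists u1, v1, u2, v2.
- by move=> e; rewrite lang_autS; exact: starL0.
- move=> e u1 v1 u2 v2 _ H1 _ H2; rewrite lang_autS.
  move/lang_autS: H2 => H2; exact: starLS H1 H2.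
Qed.

End Aut.

Ltac glia := repeat match goal with |- context [?a * ?b] =>
  let x := fresh "x" in generalize (a * b) as x; intro x end; lia.

Section Shrink.
Variables (Sigma Omega : finType) (k : nat) (P : seq ('I_k * seq ('I_k + Sigma)%type)).
Variable A : aut Sigma Omega.
Local Notation Q := (ast A).
Local Notation step := (@astep Sigma Omega A).
Local Notation T := ('I_k * Q * Q)%type.

Inductive ad (ok : 'I_k -> Q -> Q -> seq Omega -> Prop)
  : Q -> seq ('I_k + Sigma)%type -> Q -> seq Sigma -> seq Omega -> Prop :=
| ad_nil p q v : run step p [::] v q -> ad ok p [::] q [::] v
| ad_term p r q a v1 s w v2 : run step p [:: a] v1 r -> ad ok r s q w v2 ->
    ad ok p (inr a :: s) q (a :: w) (v1 ++ v2)
| ad_nt p r q X rhs s w1 w2 v1 v2 : (X, rhs) \in P -> ok X p r v1 ->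
    ad ok p rhs r w1 v1 -> ad ok r s q w2 v2 ->
    ad ok p (inl X :: s) q (w1 ++ w2) (v1 ++ v2).

Definition okAll (X : 'I_k) (p r : Q) (v : seq Omega) := True.
Definition okS (S : {set T}) (v0 : seq Omega) (X : 'I_k) (p r : Q) (v : seq Omega) :=
  v = v0 -> (X, p, r) \in S.

Lemma ad_mono ok ok' p s q w v :
  (forall X p r v, ok X p r v -> ok' X p r v) -> ad ok p s q w v -> ad ok' p s q w v.
Proof.
move=> H; elim=> {p s q w v}.
- by move=> p q v Hr; exact: ad_nil.
- by move=> p r q a v1 s w v2 Hr _ IH; apply: ad_term Hr IH.
- by move=> p r q X rhs s w1 w2 v1 v2 HP Ho _ IH1 _ IH2; apply: ad_nt HP (H _ _ _ _ Ho) IH1 IH2.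
Qed.

Lemma ad_all ok p s q w v : ad ok p s q w v -> ad okAll p s q w v.
Proof. exact: ad_mono. Qed.

Lemma ad_setT v0 p s q w v : ad okAll p s q w v -> ad (okS setT v0) p s q w v.
Proof. by apply: ad_mono => *; rewrite /okS in_setT. Qed.

Lemma ad_sound ok p s q w v : ad ok p s q w v -> derives P s w /\ run step p w v q.
Proof.
elim=> {p s q w v}.
- by move=> p q v Hr; split=> //; exact: der_nil.
- move=> p r q a v1 s w v2 Hr _ [Hd Hr2]; split; first exact: der_term.
  by rewrite -cat1s; exact: run_cat Hr Hr2.
- move=> p r q X rhs s w1 w2 v1 v2 HP _ _ [Hd1 Hr1] _ [Hd2 Hr2]; split.
    exact: der_nonterm HP Hd1 Hd2.
  exact: run_cat Hr1 Hr2.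
Qed.

Lemma ad_complete s w : derives P s w -> forall p v q, run step p w v q -> ad okAll p s q w v.
Proof.
elim=> {s w}.
- by move=> p v q Hr; exact: ad_nil.
- move=> a s w _ IH p v q H; have [r [v1 [v2 [-> [H1 H2]]]]] := run_split (u1:=[::a]) (u2:=w) H.
  by apply: ad_term H1 (IH _ _ _ H2).
- move=> X rhs s w1 w2 HP _ IH1 _ IH2 p v q H.
  have [r [v1 [v2 [-> [H1 H2]]]]] := run_split (u1:=w1) (u2:=w2) H.
  exact: ad_nt HP _ (IH1 _ _ _ H1) (IH2 _ _ _ H2).
Qed.

Definition R := foldr maxn 0 [seq size x.2 | x <- P].

Lemma size_rhs X rhs : (X, rhs) \in P -> size rhs <= R.
Proof.
rewrite /R; elim: P => [|[Y r] P' IH] //=; rewrite in_cons => /orP [/eqP [_ ->]|H].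
  exact: leq_maxl.
by rewrite leq_max IH ?orbT.
Qed.

Lemma avoid (S : {set T}) v0 X0 p0 q0 p s q w u :
  ad (okS S v0) p s q w u ->
  ad (okS (S :\ (X0, p0, q0)) v0) p s q w u \/
  exists rhs w', (X0, rhs) \in P /\ ad (okS (S :\ (X0, p0, q0)) v0) p0 rhs q0 w' v0.
Proof.
elim=> {p s q w u}.
- by move=> p q v Hr; left; exact: ad_nil.
- move=> p r q a v1 s w v2 Hr _ [IH|IH]; last by right.
  by left; apply: ad_term Hr IH.
- move=> p r q X rhs s w1 w2 v1 v2 HP Ho _ [IH1|IH1] _ [IH2|IH2]; try by right.
  case: (boolP ((v1 == v0) && ((X, p, r) == (X0, p0, q0)))).
    move=> /andP [/eqP E1 /eqP [E2 E3 E4]]; subst; right; exists rhs, w1; split=> //.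
  move=> Hn; left; apply: ad_nt HP _ IH1 IH2.
  move=> E; rewrite /okS in Ho; rewrite in_setD1 (Ho E) andbT.
  by move: Hn; rewrite E eqxx.
Qed.

Lemma cat_nil2 (X : Type) (v1 v2 : seq X) : v1 ++ v2 = [::] -> v1 = [::] /\ v2 = [::].
Proof. by case: v1 => //; case: v2. Qed.

Definition F (m : nat) := iter m (fun x => R * x + 1) 1.

Lemma F_pos m : 0 < F m.
Proof. by case: m => //= m; rewrite addn1. Qed.

Lemma eps_bound m : forall (S : {set T}), #|S| <= m ->
  forall p s q w u, ad (okS S [::]) p s q w u -> u = [::] ->
  exists w', ad okAll p s q w' [::] /\ size w' <= size s * F m.
Proof.
elim: m => [|m IHm] S HS p s q w u d; elim: d => {p s q w u}.
- by move=> p q v Hr Ev; subst v; exists [::]; split=> //; exact: ad_nil.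
- move=> p r q a v1 s w v2 Hr _ IH /cat_nil2 [E1 E2].
  subst; have [w' [H1 H2]] := IH erefl; exists (a :: w'); split.
    by rewrite -[[::]]/([::] ++ [::]); apply: ad_term Hr H1.
  by move: H2 (F_pos 0); rewrite /= mulSn; lia.
- move=> p r q X rhs s w1 w2 v1 v2 HP Ho _ _ _ _ /cat_nil2 [E1 _].
  by move: (Ho E1) => Hin; move: HS; rewrite leqn0 => /eqP/cards0_eq HS; rewrite HS in_set0 in Hin.
- by move=> p q v Hr Ev; subst v; exists [::]; split=> //; exact: ad_nil.
- move=> p r q a v1 s w v2 Hr _ IH /cat_nil2 [E1 E2].
  subst; have [w' [H1 H2]] := IH erefl; exists (a :: w'); split.
    by rewrite -[[::]]/([::] ++ [::]); apply: ad_term Hr H1.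
  by move: H2 (F_pos m.+1); rewrite /= mulSn; lia.
- move=> p r q X rhs s w1 w2 v1 v2 HP Ho d1 _ _ IH2 /cat_nil2 [E1 E2].
  subst; have Hin := Ho erefl.
  have [w2' [H21 H22]] := IH2 erefl.
  have [rhs1 [w1' [HP1 d1']]] : exists rhs1 w1', (X, rhs1) \in P /\
      ad (okS (S :\ (X, p, r)) [::]) p rhs1 r w1' [::].
    by case: (avoid X p r d1) => [H|//]; exists rhs, w1.
  have HS' : #|S :\ (X, p, r)| <= m.
    by move: HS; rewrite (cardsD1 (X, p, r) S) Hin.
  have [w1'' [H11 H12]] := IHm _ HS' _ _ _ _ _ d1' erefl.
  exists (w1'' ++ w2'); split.
    by rewrite -[[::]]/([::] ++ [::]); exact: ad_nt HP1 _ H11 H21.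
  have H12' : size w1'' <= R * F m.
    by apply: leq_trans H12 _; rewrite leq_mul2r (size_rhs HP1) ?orbT.
  move: H12' H22; rewrite size_cat /= mulSn /=.
  lia.
Qed.


Definition N := #|{: T}|.
Definition FN := F N.
Definition Bn := R * FN.
Definition cc := R * FN + FN + 1.
Definition C1 := cc * R.
Definition E := C1 + N * C1.
Definition D := E + N * C1.
Definition K := C1 + D + N * C1.

Lemma consts : [/\ C1 = cc * R, E = C1 + N * C1, D = E + N * C1, K = C1 + D + N * C1
   & Bn + 1 <= cc /\ FN <= cc].
Proof. by split=> //; rewrite /cc /Bn; lia. Qed.

Lemma cardT_le (S : {set T}) : #|S| <= N.
Proof. by rewrite /N; exact: max_card. Qed.

Lemma cardsetT : #|[set: T]| = N.
Proof. by rewrite cardsT. Qed.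

Lemma eps_node ok X p q rhs w : (X, rhs) \in P -> ad ok p rhs q w [::] ->
  exists w', ad okAll p rhs q w' [::] /\ size w' <= Bn.
Proof.
move=> HP d; have := eps_bound (m:=N) (S:=setT) _ (ad_setT [::] (ad_all d)) erefl.
rewrite cardsetT => /(_ (leqnn _)) [w' [H1 H2]]; exists w'; split=> //.
by apply: leq_trans H2 _; rewrite /Bn leq_mul2r (size_rhs HP) orbT.
Qed.

Lemma eps_sf ok p s q w : ad ok p s q w [::] ->
  exists w', ad okAll p s q w' [::] /\ size w' <= cc * size s.
Proof.
move=> d; have := eps_bound (m:=N) (S:=setT) _ (ad_setT [::] (ad_all d)) erefl.
rewrite cardsetT => /(_ (leqnn _)) [w' [H1 H2]]; exists w'; split=> //.
apply: leq_trans H2 _; rewrite mulnC leq_mul2r; case: consts => _ _ _ _ [_ ->].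
by rewrite orbT.
Qed.

Lemma tail_claim (S' : {set T}) (cS : nat) (v : seq Omega) :
  0 < size v ->
  (forall X' p' q' rhs' w', (X', rhs') \in P -> (X', p', q') \in S' ->
     ad (okS S' v) p' rhs' q' w' v -> exists rhs'' w'', (X', rhs'') \in P /\
     ad okAll p' rhs'' q' w'' v /\ size w'' + D <= cS + K * size v) ->
  (forall v', 0 < size v' < size v -> forall X' p' q' rhs' w', (X', rhs') \in P ->
     ad okAll p' rhs' q' w' v' -> exists rhs'' w'', (X', rhs'') \in P /\
     ad okAll p' rhs'' q' w'' v' /\ size w'' + E <= K * size v') ->
  forall p s q w u, ad (okS S' v) p s q w u -> forall pre, pre ++ u = v ->
  exists w', ad okAll p s q w' u /\
   ((size u = size v /\ size w' + D <= cc * size s + cS + K * size v) \/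
    exists j mm, size w' + E * j <= cc * size s + K * mm /\ mm <= size u /\
      ((j = 0 /\ mm = 0) \/ (j = 1 /\ mm < size v) \/ 2 <= j)).
Proof.
move=> Hv0 Hin Hout p s q w u d; case: consts => _ _ _ _ [HB Hc].
elim: d => {p s q w u}.
- move=> p q u Hr pre Epre; exists [::]; split; first exact: ad_nil.
  by right; exists 0, 0; rewrite /= !muln0; split=> //; split=> //; left.
- move=> p r q a v1 s w v2 Hr d IH pre Epre.
  have Hsz := congr1 size Epre; rewrite !size_cat in Hsz.
  have [w2' [H1 H2]] := IH (pre ++ v1) (ltac:(by rewrite -catA)).
  exists (a :: w2'); split; first by apply: ad_term Hr H1.
  case: H2 => [[Es Hb]|[j [mm [Hb [Hm Hs]]]]].
    left; rewrite !size_cat /=; split; first lia.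
    by move: Hb; rewrite mulnS; glia.
  right; exists j, mm; rewrite /= mulnS !size_cat; split; first by move: Hb; glia.
  by split=> //; lia.
- move=> p r q X rhs s w1 w2 v1 v2 HP Ho d1 _ d2 IH2 pre Epre.
  have Hsz := congr1 size Epre; rewrite !size_cat in Hsz.
  have [w2' [H1 H2]] := IH2 (pre ++ v1) (ltac:(by rewrite -catA)).
  have [E1|N1] := eqVneq v1 [::].
    subst v1; have [w1' [G1 G2]] := eps_node HP d1.
    exists (w1' ++ w2'); split; first by apply: ad_nt HP _ G1 H1.
    case: H2 => [[Es Hb]|[j [mm [Hb [Hm Hs]]]]].
      left; rewrite !size_cat /=; split; first lia.
      by move: Hb G2; rewrite mulnS; glia.
    right; exists j, mm; rewrite /= mulnS !size_cat; split; first by move: Hb G2; glia.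
    by split=> //; lia.
  have [E2|N2] := eqVneq v1 v.
    subst v1; have Hv2 : v2 = [::] by apply/nilP; rewrite /nilp; apply/eqP; lia.
    subst v2; have [rhs'' [w1' [G0 [G1 G2]]]] := Hin _ _ _ _ _ HP (Ho erefl) d1.
    have [w2'' [K1 K2]] := eps_sf d2.
    exists (w1' ++ w2''); split; first by apply: ad_nt G0 _ G1 K1.
    left; rewrite !size_cat /=; split; first lia.
    by move: G2 K2; rewrite mulnS; glia.
  have Hlt : 0 < size v1 < size v.
    apply/andP; split; first by rewrite lt0n size_eq0 N1.
    rewrite ltn_neqAle; apply/andP; split; last lia.
    apply/negP => /eqP Es.
    have Ep : pre = [::] by apply/nilP; rewrite /nilp; apply/eqP; lia.
    have Ev : v2 = [::] by apply/nilP; rewrite /nilp; apply/eqP; lia.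
    by move: N2; rewrite -Epre Ep Ev /= cats0 eqxx.
  have [rhs'' [w1' [G0 [G1 G2]]]] := Hout _ Hlt _ _ _ _ _ HP (ad_all d1).
  exists (w1' ++ w2'); split; first by apply: ad_nt G0 _ G1 H1.
  case: H2 => [[Es Hb]|[j [mm [Hb [Hm Hs]]]]].
    by exfalso; move: Hlt; lia.
  right; exists j.+1, (size v1 + mm); rewrite !size_cat /= !mulnS mulnDr; split; first by move: Hb G2; glia.
  by split; [lia|case: Hs => [[-> ->]|[[-> _]|]]; lia].
Qed.


Lemma main_bound n : forall v, size v <= n -> 0 < size v ->
  forall m (S : {set T}), #|S| <= m ->
  forall X p q rhs w, (X, rhs) \in P -> (X, p, q) \in S ->
  ad (okS S v) p rhs q w v ->
  exists rhs' w', (X, rhs') \in P /\ ad okAll p rhs' q w' v /\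
    size w' + D <= #|S| * C1 + K * size v.
Proof.
elim: n => [|n IHn] v Hvn Hv0; first by move: Hvn Hv0; case: v.
move=> m; elim: m => [|m IHm] S HS X p q rhs w HP HX d.
  by move: HS; rewrite leqn0 => /eqP/cards0_eq HS; rewrite HS in_set0 in HX.
set S' := S :\ (X, p, q).
have HS'c : #|S| = #|S'|.+1 by rewrite (cardsD1 (X, p, q) S) HX.
have HS' : #|S'| <= m by move: HS; rewrite HS'c.
have [rhs1 [w1 [HP1 d1]]] : exists rhs1 w1, (X, rhs1) \in P /\ ad (okS S' v) p rhs1 q w1 v.
  by case: (avoid X p q d) => [H|//]; exists rhs, w.
have Hin := IHm S' HS'.
have Hout : forall v', 0 < size v' < size v -> forall X' p' q' rhs' w', (X', rhs') \in P ->
     ad okAll p' rhs' q' w' v' -> exists rhs'' w'', (X', rhs'') \in P /\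
     ad okAll p' rhs'' q' w'' v' /\ size w'' + E <= K * size v'.
  move=> v' /andP [H1 H2] X' p' q' rhs' w' HP' d'.
  have Hn : size v' <= n by rewrite -ltnS; apply: leq_trans H2 Hvn.
  have [rhs'' [w'' [G0 [G1 G2]]]] :=
    IHn v' Hn H1 N setT (cardT_le _) X' p' q' rhs' w' HP' (in_setT _) (ad_setT v' d').
  exists rhs'', w''; split=> //; split=> //.
  move: G2; rewrite cardsetT; case: consts => _ _ -> _ _; glia.
have [w' [H1 H2]] := tail_claim Hv0 Hin Hout d1 (pre:=[::]) erefl.
exists rhs1, w'; split=> //; split=> //.
have Hcr : cc * size (T:=(('I_k + Sigma)%type)) rhs1 <= cc * R by rewrite leq_mul2l (size_rhs HP1) orbT.
have HKv : K <= K * size v by rewrite leq_pmulr.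
rewrite HS'c mulSn.
case: consts => HC1 HE HD HK _.
case: H2 => [[_ Hb]|[j [mm [Hb [Hm Hs]]]]].
  by move: Hb Hcr HC1; glia.
case: Hs => [[Ej Em]|[[Ej Em]|Hj]].
- subst; move: Hb Hcr HC1 HKv HD HK; rewrite !muln0; glia.
- subst; have HKm : K * mm.+1 <= K * size v by rewrite leq_mul2l Em orbT.
  move: Hb Hcr HC1 HKv HD HK HE HKm; rewrite muln1 mulnS; glia.
- have H2E : E * 2 <= E * j by rewrite leq_mul2l Hj orbT.
  have HKm : K * mm <= K * size v by rewrite leq_mul2l Hm orbT.
  move: H2E Hb Hcr HC1 HKv HD HK HE HKm; rewrite muln2 -addnn; glia.
Qed.

Definition K0 := Bn + N * C1 + K.

Lemma shrink_top S0 p q w v : ad okAll p [:: inl S0] q w v ->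
  exists w', ad okAll p [:: inl S0] q w' v /\ size w' <= K0 * (size v).+1.
Proof.
move=> d; inversion d as [| |p' r q' X rhs s w1 w2 v1 v2 HP _ d1 d2]; subst.
inversion d2 as [r' q'' v2' Hr| |]; subst.
have HK0 : K0 <= K0 * (size (v1 ++ v2)).+1 by rewrite leq_pmulr.
have [E1|N1] := eqVneq v1 [::].
  subst v1; have [w1' [G1 G2]] := eps_node HP d1.
  exists (w1' ++ [::]); split; first by apply: ad_nt HP _ G1 (ad_nil _ Hr).
  by rewrite cats0; apply: leq_trans HK0; apply: leq_trans G2 _; rewrite /K0 -addnA leq_addr.
have Hv1 : 0 < size v1 by rewrite lt0n size_eq0.
have [rhs' [w1' [G0 [G1 G2]]]] := main_bound (leqnn _) Hv1 (cardT_le setT) HP (in_setT _) (ad_setT v1 d1).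
exists (w1' ++ [::]); split; first by apply: ad_nt G0 _ G1 (ad_nil _ Hr).
have HKv : K * size v1 <= K0 * size (v1 ++ v2).
  by apply: leq_mul; [rewrite /K0 leq_addl|rewrite size_cat leq_addr].
move: G2 HKv; rewrite cats0 cardsetT mulnS /K0; glia.
Qed.

End Shrink.

Lemma mem_words_upto (A : finType) n w : (w \in words_upto A n) = (size w <= n).
Proof.
rewrite /words_upto; apply/flatten_mapP/idP.
  move=> [m]; rewrite mem_iota add0n => /andP [_ Hm] /mapP [x _ ->].
  by rewrite size_tuple -ltnS.
move=> Hw; exists (size w); first by rewrite mem_iota add0n ltnS Hw.
apply/mapP; exists (Tuple (eqxx (size w))); first by rewrite mem_enum.
by [].
Qed.

Lemma uniq_words_upto (A : finType) n : uniq (words_upto A n).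
Proof.
elim: n => [|n IH].
  by rewrite /words_upto /= cats0 (map_inj_uniq val_inj) enum_uniq.
have -> : words_upto A n.+1 = words_upto A n ++ map (@tval n.+1 A) (enum {: n.+1.-tuple A}).
  by rewrite /words_upto -addn1 iotaD map_cat flatten_cat /= cats0.
rewrite cat_uniq IH (map_inj_uniq val_inj) enum_uniq andbT /=.
apply/hasPn => x /mapP [y _ ->]; rewrite mem_words_upto size_tuple.
by rewrite ltnn.
Qed.

Lemma pbP (P : Prop) : pb P = true <-> P.
Proof. by rewrite /pb; case: ClassicalEpsilon.excluded_middle_informative. Qed.

Lemma lin_preimage (Sigma Omega : finType) (t : seq Sigma -> option (seq Omega)) (X : pred (seq Sigma)) :
  rational_fun t -> context_free X -> exists K1, forall u v, X u -> t u = Some v ->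
  exists u', X u' /\ t u' = Some v /\ size u' <= K1.+1 * (size v).+1.
Proof.
move=> [e He] [k [S0 [P HX]]].
exists (K0 P (aut_of e)) => u v Xu tu.
have d : ad P (okAll (A:=aut_of e)) (aini (aut_of e)) [:: inl S0] (afin (aut_of e)) u v.
  apply: ad_complete; first by apply/HX.
  by have := proj2 (aut_of_correct e u v) (proj1 (He u v) tu).
have [w' [d' Hs]] := shrink_top d.
have [Hd Hr] := ad_sound d'.
exists w'; split; first by apply/HX.
split; first by apply/He; apply/aut_of_correct.
by apply: leq_trans Hs _; rewrite leq_mul2r leqnSn orbT.
Qed.

Lemma growth_le (Sigma Omega : finType) (t : seq Sigma -> option (seq Omega)) (X : pred (seq Sigma)) M :
  (forall u v, X u -> t u = Some v ->
     exists u', X u' /\ t u' = Some v /\ size u' <= M * (size v).+1) ->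
  forall n, lang_growth (image_lang t X) n <= fgrowth t X (M * n.+1).
Proof.
move=> Hlin n; rewrite /lang_growth /fgrowth -size_filter.
apply: uniq_leq_size; first by rewrite filter_uniq // uniq_words_upto.
move=> v; rewrite mem_filter mem_words_upto => /andP [/pbP [u [Xu tu]] Hv].
have [u' [Xu' [tu' Hu']]] := Hlin _ _ Xu tu.
rewrite mem_undup mem_pmap; apply/mapP; exists u' => //.
rewrite mem_filter Xu' mem_words_upto /=; apply: leq_trans Hu' _.
by rewrite leq_mul2l ltnS Hv orbT.
Qed.

Lemma sexp_ge (Sigma Omega : finType) (t : seq Sigma -> option (seq Omega)) (X : pred (seq Sigma)) n :
  fgrowth t X n <= fgrowth (suffix_expansion t) X n.
Proof.
rewrite /fgrowth.
set h := fun s : seq (seq Omega) => if s is y :: _ then y else odflt [::] (t [::]).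
apply: leq_trans (_ : size (map h (undup (pmap (suffix_expansion t) (filter X (words_upto Sigma n))))) <= _);
  last by rewrite size_map.
apply: uniq_leq_size; first exact: undup_uniq.
move=> v; rewrite mem_undup mem_pmap => /mapP [u Hu tu].
apply/mapP; exists (map (fun k => odflt [::] (t (drop k u))) (iota 0 (size u))).
  by rewrite mem_undup mem_pmap; apply/mapP; exists u => //; rewrite /suffix_expansion -tu.
by case: u Hu tu => [|a u] _ tu; rewrite /h /= ?drop0 -tu.
Qed.

From Stdlib Require Import Reals Lra.

Lemma exp_transfer (f g : nat -> nat) (M : nat) :
  (forall n, (f n <= g (M.+1 * n.+1))%N) -> grows_exponentially f -> grows_exponentially g.
Proof.
move=> Hfg [c [Hc H]].
have Ha : (0 < INR M.+1)%R by apply: lt_0_INR; apply/ltP.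
have Hc0 : (0 < c)%R by lra.
set c' := Rpower c (/ INR (2 * M.+1)).
have Hc'0 : (0 < c')%R by rewrite /c' /Rpower; exact: exp_pos.
exists c'; split.
  rewrite /c' -(Rpower_O _ Hc0); apply: Rpower_lt => //.
  by apply: Rinv_0_lt_compat; apply: lt_0_INR; apply/ltP.
move=> N; have [n [HNn Hn]] := H N.+1.
exists (M.+1 * n.+1)%N; split.
  by apply: leq_trans (ltnW HNn) _; rewrite mulSn; lia.
apply: (Rle_trans _ (c ^ n)); last first.
  apply: (Rle_trans _ _ _ Hn); apply: le_INR; apply/leP; exact: Hfg.
rewrite -!Rpower_pow // /c' Rpower_mult; apply: Rle_Rpower; first lra.
have Hn1 : (1 <= INR n)%R by apply: (le_INR 1); apply/leP; lia.
rewrite (mult_INR 2 M.+1) (mult_INR M.+1 n.+1) (S_INR n).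
have H2 : INR 2 = 2%R by rewrite /=; lra.
rewrite H2; move: Ha; set a := INR M.+1 => Ha.
replace (/ (2 * a) * (a * (INR n + 1)))%R with ((INR n + 1) / 2)%R by (field; lra).
lra.
Qed.


Theorem proposition3 (Sigma Omega : finType)
  (t : seq Sigma -> option (seq Omega)) (X : pred (seq Sigma)) :
  rational_fun t ->
  suffix_closed_dom t ->
  (forall u, X u -> in_dom t u) ->
  context_free X ->
  grows_exponentially (lang_growth (image_lang t X)) ->
  grows_exponentially (fgrowth t X) /\
  grows_exponentially (fgrowth (suffix_expansion t) X).
Proof.
move=> Hrat _ _ Hcf Hgrow.
have [K1 Hlin] := lin_preimage Hrat Hcf.
have Hf : grows_exponentially (fgrowth t X) := exp_transfer (M:=K1) (growth_le Hlin) Hgrow.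
split=> //.
case: Hf => c [Hc H]; exists c; split=> // N; have [n [Hn H']] := H N.
exists n; split=> //; apply: (Rle_trans _ _ _ H'); apply: le_INR; apply/leP; exact: sexp_ge.
Qed.
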